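(* Let $S$ be a $\Sigma_1$-sequent, $H$ a Herbrand structure of $S$, $D=(U_1,\dots,U_q)\circ W$ a decomposition of $H$ with $W=\{\bar w_1,\dots,\bar w_k\}$, and $S^\sim$ the schematic extended Herbrand sequent of $S$ w.r.t. $D$. Let $A$ be a formula in conjunctive normal form such that $[X\backslash\lambda\bar\alpha.A]$ is a solution of $S^\sim$. Then the procedure $\mathrm{SF}$ described below terminates on input $A$, and for every $B\in\mathrm{SF}(A)$, $[X\backslash\lambda\bar\alpha.B]$ is a solution of $S^\sim$. Procedure $\mathrm{SF}(A)$: (i) replace $A$ by the CNF obtained from $A$ by deleting all clauses containing none of the variables $\alpha_1,\dots,\alpha_n$; (ii) set $R:=\{A\}$; (iii) for each $B\in\mathrm{forget}(A)$: if the sequent $B[\bar\alpha\backslash\bar w_1],\dots,B[\bar\alpha\backslash\bar w_k],\Gamma\vdash\Delta$ is E-valid, set $R:=R\cup\mathrm{SF}(B)$; (iv) return $R$.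
   Context: We work in first-order predicate logic with equality. A $\Sigma_1$-sequent is a sequent $S$ of the form $\forall\bar x_1 F_1,\dots,\forall\bar x_p F_p\vdash\exists\bar x_{p+1}F_{p+1},\dots,\exists\bar x_q F_q$, where each $F_i$ is quantifier-free and $\bar x_i$ is a block of $k_i\ge 0$ variables. A sequent is E-valid if it is valid in predicate logic with equality (a quantifier-free formula or sequent with free variables is called E-valid if its universal closure is); a quasi-tautology is a quantifier-free E-valid sequent. A Herbrand structure of $S$ is a tuple $H=(H_1,\dots,H_q)$, $H_i$ a finite set of $k_i$-vectors of ground terms, such that, with $\mathcal F_i=\{F_i[\bar x_i\backslash\bar t]:\bar t\in H_i\}$ if $k_i>0$ and $\mathcal F_i=\{F_i\}$ if $k_i=0$, the sequent $\mathcal F_1\cup\dots\cup\mathcal F_p\vdash\mathcal F_{p+1}\cup\dots\cup\mathcal F_q$ is a quasi-tautology. A decomposition of $H$ is a pair $D=(U_1,\dots,U_q)\circ W$ where, for fresh variables $\bar\alpha=(\alpha_1,\dots,\alpha_n)$, each $U_i$ is a finite set of $k_i$-vectors of terms possibly containing the $\alpha_j$, and $W=\{\bar w_1,\dots,\bar w_k\}$ is a finite set of $n$-vectors of ground terms not containing any $\alpha_j$, such that $H_i=\{u[\bar\alpha\backslash\bar w]:u\in U_i,\bar w\in W\}$ for every $i$ with $k_i>0$. Put $\mathcal F'_i=\{F_i[\bar x_i\backslash\bar t]:\bar t\in U_i\}$ if $k_i>0$ and $\mathcal F'_i=\{F_i\}$ if $k_i=0$, and let $\Gamma=\mathcal F'_1\cup\dots\cup\mathcal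 F'_p$, $\Delta=\mathcal F'_{p+1}\cup\dots\cup\mathcal F'_q$. For an $n$-place predicate variable $X$, the schematic extended Herbrand sequent of $S$ w.r.t. $D$ is $S^\sim:\ X\bar\alpha\to\bigwedge_{i=1}^k X\bar w_i,\ \Gamma\vdash\Delta$. For a quantifier-free formula $A$ whose free variables are among $\alpha_1,\dots,\alpha_n$, $[X\backslash\lambda\bar\alpha.A]$ is a solution of $S^\sim$ if $S^\sim[X\backslash\lambda\bar\alpha.A]$ is a quasi-tautology. Forgetful reasoning: a CNF is regarded as a finite set of clauses $\{C_i\}_{i\in I}$ (the $\alpha_j$ being treated as constants). For clauses $C_1,C_2$, $\mathrm{res}(C_1,C_2)$ is the set of propositional resolvents of $C_1,C_2$ and $\mathrm{para}(C_1,C_2)$ is the set of clauses obtainable from $C_1,C_2$ by one ground paramodulation step. For a formula $F$ with CNF $\{C_i\}_{i\in I}$, $$\mathrm{forget}(F)=\Big\{C\wedge\bigwedge_{i\in I\setminus\{j,m\}}C_i\ \Big|\ j,m\in I,\ C\in\mathrm{res}(C_j,C_m)\cup\mathrm{para}(C_j,C_m)\Big\}.$$ *)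

(* Defs.v *)
From Stdlib Require Import List Arith Bool.
Import ListNotations.

(* Terms: ordinary variables [Var x], the fresh variables [Alpha j]
   (alpha_{j+1} of the paper, j < n), and function applications
   (constants are 0-ary applications). *)
Inductive term : Type :=
| Var   : nat -> term
| Alpha : nat -> term
| Fn    : nat -> list term -> term.

Inductive formula : Type :=
| FTrue  : formula
| FFalse : formula
| FPred  : nat -> list term -> formula
| FEq    : term -> term -> formula
| FNot   : formula -> formula
| FAnd   : formula -> formula -> formula
| FOr    : formula -> formula -> formula
| FImp   : formula -> formula -> formula.

Fixpoint bigand (l : list formula) : formula :=
  match l with
  | [] => FTrue
  | [f] => f
  | f :: l' => FAnd f (bigand l')
  end.

Fixpoint bigor (l : list formula) : formula :=
  match l with
  | [] => FFalse
  | [f] => f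
  | f :: l' => FOr f (bigor l')
  end.

Section Sem.
Variables (D : Type) (fi : nat -> list D -> D) (pi : nat -> list D -> Prop)
          (ev : nat -> D) (ea : nat -> D).

Fixpoint eval (t : term) : D :=
  match t with
  | Var x => ev x
  | Alpha j => ea j
  | Fn f l => fi f (map eval l)
  end.

Fixpoint sat (F : formula) : Prop :=
  match F with
  | FTrue => True
  | FFalse => False
  | FPred p l => pi p (map eval l)
  | FEq s t => eval s = eval t
  | FNot G => ~ sat G
  | FAnd G K => sat G /\ sat K
  | FOr G K => sat G \/ sat K
  | FImp G K => sat G -> sat K
  end.
End Sem.

(* A quantifier-free sequent Gamma |- Delta is E-valid (its universal
   closure is valid in every structure, equality being identity); for
   quantifier-free sequents this is "quasi-tautology". *)
Definition E_valid (G Dl : list formula) : Prop :=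
  forall (D : Type) (fi : nat -> list D -> D) (pi : nat -> list D -> Prop)
         (ev : nat -> D) (ea : nat -> D),
    (forall F, In F G -> sat D fi pi ev ea F) ->
    exists F, In F Dl /\ sat D fi pi ev ea F.

Fixpoint ground (t : term) : Prop :=
  match t with
  | Var _ => False
  | Alpha _ => False
  | Fn _ l => (fix gl (l : list term) : Prop :=
                 match l with [] => True | a :: l' => ground a /\ gl l' end) l
  end.

Fixpoint alpha_term (n : nat) (t : term) : Prop :=
  match t with
  | Var _ => False
  | Alpha j => j < n
  | Fn _ l => (fix gl (l : list term) : Prop :=
                 match l with [] => True | a :: l' => alpha_term n a /\ gl l' end) l
  end.

Fixpoint alpha_formula (n : nat) (F : formula) : Prop :=
  match F with
  | FTrue | FFalse => True
  | FPred _ l => Forall (alpha_term n) l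
  | FEq s t => alpha_term n s /\ alpha_term n t
  | FNot G => alpha_formula n G
  | FAnd G K | FOr G K | FImp G K => alpha_formula n G /\ alpha_formula n K
  end.

Fixpoint alpha_bounded (n : nat) (t : term) : Prop :=
  match t with
  | Var _ => True
  | Alpha j => j < n
  | Fn _ l => (fix gl (l : list term) : Prop :=
                 match l with [] => True | a :: l' => alpha_bounded n a /\ gl l' end) l
  end.

Fixpoint lookup (xs : list nat) (ts : list term) (x : nat) : option term :=
  match xs, ts with
  | y :: xs', t :: ts' => if Nat.eqb x y then Some t else lookup xs' ts' x
  | _, _ => None
  end.

Fixpoint subst_t (xs : list nat) (ts : list term) (t : term) : term :=
  match t with
  | Var x => match lookup xs ts x with Some u => u | None => Var x end
  | Alpha j => Alpha j
  | Fn f l => Fn f (map (subst_t xs ts) l)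
  end.

Fixpoint subst_f (xs : list nat) (ts : list term) (F : formula) : formula :=
  match F with
  | FTrue => FTrue
  | FFalse => FFalse
  | FPred p l => FPred p (map (subst_t xs ts) l)
  | FEq s t => FEq (subst_t xs ts s) (subst_t xs ts t)
  | FNot G => FNot (subst_f xs ts G)
  | FAnd G K => FAnd (subst_f xs ts G) (subst_f xs ts K)
  | FOr G K => FOr (subst_f xs ts G) (subst_f xs ts K)
  | FImp G K => FImp (subst_f xs ts G) (subst_f xs ts K)
  end.

Fixpoint asubst_t (w : list term) (t : term) : term :=
  match t with
  | Var x => Var x
  | Alpha j => nth j w (Alpha j)
  | Fn f l => Fn f (map (asubst_t w) l)
  end.

Fixpoint asubst_f (w : list term) (F : formula) : formula :=
  match F with
  | FTrue => FTrue
  | FFalse => FFalse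
  | FPred p l => FPred p (map (asubst_t w) l)
  | FEq s t => FEq (asubst_t w s) (asubst_t w t)
  | FNot G => FNot (asubst_f w G)
  | FAnd G K => FAnd (asubst_f w G) (asubst_f w K)
  | FOr G K => FOr (asubst_f w G) (asubst_f w K)
  | FImp G K => FImp (asubst_f w G) (asubst_f w K)
  end.

(* A Sigma_1-sequent is given by p and a list of q blocks (xs_i, F_i):
   blocks 1..p are the antecedent formulas  forall xs_i F_i,
   blocks p+1..q the succedent formulas  exists xs_i F_i. *)
Definition block := (list nat * formula)%type.

Definition sigma1_sequent (p : nat) (bs : list block) : Prop :=
  p <= length bs /\ Forall (fun b => NoDup (fst b)) bs.

Definition inst_set (b : block) (T : list (list term)) : list formula :=
  match fst b with
  | [] => [snd b]
  | _ => map (fun t => subst_f (fst b) t (snd b)) T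
  end.

Definition inst_all (bs : list block) (Ts : list (list (list term))) : list formula :=
  flat_map (fun bT => inst_set (fst bT) (snd bT)) (combine bs Ts).

Definition dflt_block : block := ([], FTrue).

Definition herbrand_structure (p : nat) (bs : list block)
    (H : list (list (list term))) : Prop :=
  length H = length bs /\
  (forall i, i < length bs -> forall t, In t (nth i H []) ->
      length t = length (fst (nth i bs dflt_block)) /\ Forall ground t) /\
  E_valid (inst_all (firstn p bs) (firstn p H))
          (inst_all (skipn p bs) (skipn p H)).

Definition decomposition (bs : list block) (H : list (list (list term)))
    (n : nat) (U : list (list (list term))) (W : list (list term)) : Prop :=
  length U = length bs /\
  (forall i, i < length bs -> forall u, In u (nth i U []) ->
      length u = length (fst (nth i bs dflt_block)) /\ Forall (alpha_bounded n) u) /\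
  (forall w, In w W -> length w = n /\ Forall ground w) /\
  (forall i, i < length bs -> 0 < length (fst (nth i bs dflt_block)) ->
     forall t, In t (nth i H []) <->
       exists u w, In u (nth i U []) /\ In w W /\ t = map (asubst_t w) u).

Definition Gamma (p : nat) (bs : list block) (U : list (list (list term))) :=
  inst_all (firstn p bs) (firstn p U).
Definition Delta (p : nat) (bs : list block) (U : list (list (list term))) :=
  inst_all (skipn p bs) (skipn p U).

Definition is_solution (p : nat) (bs : list block) (n : nat)
    (U : list (list (list term))) (W : list (list term)) (A : formula) : Prop :=
  alpha_formula n A /\
  E_valid (FImp A (bigand (map (fun w => asubst_f w A) W)) :: Gamma p bs U)
          (Delta p bs U).

Inductive atom : Type :=
| APred : nat -> list term -> atom
| AEq   : term -> term -> atom.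

Definition literal := (bool * atom)%type.   (* true = positive *)
Definition clause := list literal.
Definition cnf := list clause.

Definition atom_formula (a : atom) : formula :=
  match a with APred p l => FPred p l | AEq s t => FEq s t end.
Definition lit_formula (L : literal) : formula :=
  if fst L then atom_formula (snd L) else FNot (atom_formula (snd L)).
Definition clause_formula (C : clause) : formula := bigor (map lit_formula C).
Definition cnf_formula (A : cnf) : formula := bigand (map clause_formula A).

Fixpoint term_eqb (s t : term) {struct s} : bool :=
  match s, t with
  | Var x, Var y => Nat.eqb x y
  | Alpha x, Alpha y => Nat.eqb x y
  | Fn f l, Fn g m =>
      Nat.eqb f g &&
      (fix leq (l m : list term) : bool :=
         match l, m with
         | [], [] => true
         | a :: l', b :: m' => term_eqb a b && leq l' m'
         | _, _ => false
         end) l m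
  | _, _ => false
  end.

Fixpoint terms_eqb (l m : list term) : bool :=
  match l, m with
  | [], [] => true
  | a :: l', b :: m' => term_eqb a b && terms_eqb l' m'
  | _, _ => false
  end.

Definition atom_eqb (a b : atom) : bool :=
  match a, b with
  | APred p l, APred q m => Nat.eqb p q && terms_eqb l m
  | AEq s t, AEq u v => term_eqb s u && term_eqb t v
  | _, _ => false
  end.

Definition lit_eqb (L M : literal) : bool :=
  Bool.eqb (fst L) (fst M) && atom_eqb (snd L) (snd M).

Definition lit_neg (L : literal) : literal := (negb (fst L), snd L).

(* C \ {L}  (clauses are regarded as sets of literals) *)
Definition remove_lit (L : literal) (C : clause) : clause :=
  filter (fun M => negb (lit_eqb L M)) C.

Definition res (C1 C2 : clause) : list clause :=
  flat_map (fun L => if existsb (lit_eqb (lit_neg L)) C2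
                     then [remove_lit L C1 ++ remove_lit (lit_neg L) C2]
                     else []) C1.

Inductive rep_t (s t : term) : term -> term -> Prop :=
| rep_root : rep_t s t s t
| rep_fn : forall f l l', rep_l s t l l' -> rep_t s t (Fn f l) (Fn f l')
with rep_l (s t : term) : list term -> list term -> Prop :=
| rep_hd : forall a a' l, rep_t s t a a' -> rep_l s t (a :: l) (a' :: l)
| rep_tl : forall a l l', rep_l s t l l' -> rep_l s t (a :: l) (a :: l').

Inductive rep_a (s t : term) : atom -> atom -> Prop :=
| rep_pred : forall p l l', rep_l s t l l' -> rep_a s t (APred p l) (APred p l')
| rep_eql : forall u u' v, rep_t s t u u' -> rep_a s t (AEq u v) (AEq u' v)
| rep_eqr : forall u v v', rep_t s t v v' -> rep_a s t (AEq u v) (AEq u v').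

Definition para (C1 C2 C : clause) : Prop :=
  exists s t e, In e C1 /\ (e = (true, AEq s t) \/ e = (true, AEq t s)) /\
  exists b a a', In (b, a) C2 /\ rep_a s t a a' /\
    C = (b, a') :: (remove_lit (b, a) C2 ++ remove_lit e C1).

Definition drop_two (j m : nat) (A : cnf) : cnf :=
  map snd (filter (fun ic => negb (Nat.eqb (fst ic) j) && negb (Nat.eqb (fst ic) m))
                  (combine (seq 0 (length A)) A)).

Definition forget (A B : cnf) : Prop :=
  exists j m C, j <> m /\ j < length A /\ m < length A /\
    (In C (res (nth j A []) (nth m A [])) \/ para (nth j A []) (nth m A []) C) /\
    B = C :: drop_two j m A.

Fixpoint has_alpha_t (n : nat) (t : term) : bool :=
  match t with
  | Var _ => false
  | Alpha j => Nat.ltb j n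
  | Fn _ l => existsb (has_alpha_t n) l
  end.

Definition has_alpha_a (n : nat) (a : atom) : bool :=
  match a with
  | APred _ l => existsb (has_alpha_t n) l
  | AEq s t => has_alpha_t n s || has_alpha_t n t
  end.

Definition has_alpha_c (n : nat) (C : clause) : bool :=
  existsb (fun L => has_alpha_a n (snd L)) C.

Definition prune (n : nat) (A : cnf) : cnf := filter (has_alpha_c n) A.

Definition sf_test (p : nat) (bs : list block) (U : list (list (list term)))
    (W : list (list term)) (B : cnf) : Prop :=
  E_valid (map (fun w => asubst_f w (cnf_formula B)) W ++ Gamma p bs U)
          (Delta p bs U).

(* Big-step semantics of the recursive procedure SF:
   [SF n test A R] means "the call SF(A) terminates and returns R".
   Termination on input A = existence of such a derivation. *)
Inductive SF (n : nat) (test : cnf -> Prop) : cnf -> (cnf -> Prop) -> Prop :=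
| SF_call : forall (A : cnf) (Rs : cnf -> cnf -> Prop),
    (forall B, forget (prune n A) B -> test B -> SF n test B (Rs B)) ->
    SF n test A
       (fun C => C = prune n A \/
                 exists B, forget (prune n A) B /\ test B /\ Rs B C).

(* Main.v *)
Require Import Defs.
From Stdlib Require Import List Arith Bool Lia Classical ClassicalEpsilon.
Import ListNotations.

Fixpoint term_ind' (P : term -> Prop) (hv : forall x, P (Var x))
  (ha : forall j, P (Alpha j)) (hf : forall f l, Forall P l -> P (Fn f l)) (t : term) : P t :=
  match t with
  | Var x => hv x
  | Alpha j => ha j
  | Fn f l => hf f l ((fix go (l : list term) : Forall P l :=
       match l with [] => Forall_nil _ | a :: l' => Forall_cons _ (term_ind' P hv ha hf a) (go l') end) l)
  end.

Section Sem.
Variables (D : Type) (fi : nat -> list D -> D) (pi : nat -> list D -> Prop) (ev : nat -> D).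

Lemma sat_bigand ea l : sat D fi pi ev ea (bigand l) <-> (forall F, In F l -> sat D fi pi ev ea F).
Proof.
  induction l as [|a l IH]; [simpl; split; [tauto| auto]|].
  destruct l as [|b l'].
  - simpl. split; [intros H F [<-|[]]; auto | intros H; apply H; auto].
  - change (bigand (a :: b :: l')) with (FAnd a (bigand (b :: l'))).
    simpl sat at 1. rewrite IH. split.
    + intros [Ha Hl] F [<-|HF]; auto.
    + intros H; split; [apply H; left; auto| intros F HF; apply H; right; auto].
Qed.

Lemma sat_bigor ea l : sat D fi pi ev ea (bigor l) <-> (exists F, In F l /\ sat D fi pi ev ea F).
Proof.
  induction l as [|a l IH]; [simpl; split; [tauto| intros [F [[] _]]]|].
  destruct l as [|b l'].
  - simpl. split; [intros H; exists a; auto | intros [F [[<-|[]] HF]]; auto].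
  - change (bigor (a :: b :: l')) with (FOr a (bigor (b :: l'))).
    simpl sat at 1. rewrite IH. split.
    + intros [Ha|[F [HF1 HF2]]]; [exists a; simpl; auto| exists F; simpl; auto].
    + intros [F [[<-|HF] HF2]]; [left; auto| right; exists F; auto].
Qed.

Lemma eval_asubst ea w t :
  eval D fi ev ea (asubst_t w t) = eval D fi ev (fun j => eval D fi ev ea (nth j w (Alpha j))) t.
Proof.
  induction t using term_ind'; simpl; auto.
  f_equal. rewrite map_map. apply map_ext_in. intros a Ha.
  rewrite Forall_forall in H. auto.
Qed.

Lemma sat_asubst ea w F :
  sat D fi pi ev ea (asubst_f w F) <-> sat D fi pi ev (fun j => eval D fi ev ea (nth j w (Alpha j))) F.
Proof.
  induction F; simpl; try tauto.
  - rewrite map_map. rewrite (map_ext _ _ (eval_asubst ea w)). tauto.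
  - rewrite !eval_asubst. tauto.
Qed.
End Sem.

Lemma term_eqb_sound s : forall t, term_eqb s t = true -> s = t.
Proof.
  induction s using term_ind'; intros [y|y|g m]; simpl; try discriminate;
    try (intro E; apply Nat.eqb_eq in E; subst; reflexivity).
  intro E. apply andb_prop in E as [E1 E2]. apply Nat.eqb_eq in E1. subst g. f_equal.
  revert m E2. induction H as [|a l Ha Hl IH]; intros [|b m]; simpl; try discriminate; auto.
  intro E. apply andb_prop in E as [E1 E2]. f_equal; auto.
Qed.

Lemma terms_eqb_sound l : forall m, terms_eqb l m = true -> l = m.
Proof.
  induction l; intros [|b m]; simpl; try discriminate; auto.
  intro E. apply andb_prop in E as [E1 E2]. f_equal; auto using term_eqb_sound.
Qed.

Lemma lit_eqb_sound L M : lit_eqb L M = true -> L = M.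
Proof.
  destruct L as [b a], M as [c e]. unfold lit_eqb; simpl.
  intro E. apply andb_prop in E as [E1 E2]. apply eqb_prop in E1. subst c. f_equal.
  destruct a, e; simpl in E2; try discriminate; apply andb_prop in E2 as [E3 E4].
  - apply Nat.eqb_eq in E3; apply terms_eqb_sound in E4; subst; auto.
  - apply term_eqb_sound in E3; apply term_eqb_sound in E4; subst; auto.
Qed.

Lemma in_remove_lit L C M : In M C -> M <> L -> In M (remove_lit L C).
Proof.
  intros H1 H2. unfold remove_lit. apply filter_In. split; auto.
  destruct (lit_eqb L M) eqn:E; auto. apply lit_eqb_sound in E. congruence.
Qed.

Lemma remove_lit_in L C M : In M (remove_lit L C) -> In M C.
Proof. unfold remove_lit. intro H; apply filter_In in H; tauto. Qed.

Scheme rep_t_ind2 := Induction for rep_t Sort Prop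
with rep_l_ind2 := Induction for rep_l Sort Prop.

Section Sem.
Variables (D : Type) (fi : nat -> list D -> D) (pi : nat -> list D -> Prop) (ev : nat -> D) (ea : nat -> D).
Notation ev_ := (eval D fi ev ea).
Notation S := (sat D fi pi ev ea).

Lemma rep_eval s t : ev_ s = ev_ t ->
  (forall u u', rep_t s t u u' -> ev_ u = ev_ u') /\
  (forall l l', rep_l s t l l' -> map ev_ l = map ev_ l').
Proof.
  intro Hst. split.
  - apply (rep_t_ind2 s t (fun u u' _ => ev_ u = ev_ u') (fun l l' _ => map ev_ l = map ev_ l'));
      simpl; intros; try congruence.
  - apply (rep_l_ind2 s t (fun u u' _ => ev_ u = ev_ u') (fun l l' _ => map ev_ l = map ev_ l'));
      simpl; intros; try congruence.
Qed.

Lemma rep_a_sat s t a a' : ev_ s = ev_ t -> rep_a s t a a' ->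
  (S (atom_formula a) <-> S (atom_formula a')).
Proof.
  intros Hst Hr. destruct (rep_eval s t Hst) as [Ht Hl].
  destruct Hr; simpl.
  - rewrite (Hl _ _ H). tauto.
  - rewrite (Ht _ _ H). tauto.
  - rewrite (Ht _ _ H). tauto.
Qed.

Definition csat (C : clause) := S (clause_formula C).

Lemma csat_iff C : csat C <-> exists L, In L C /\ S (lit_formula L).
Proof.
  unfold csat, clause_formula. rewrite sat_bigor. split.
  - intros [F [HF HS]]. apply in_map_iff in HF as [L [<- HL]]. eauto.
  - intros [L [HL HS]]. exists (lit_formula L). split; auto. apply in_map; auto.
Qed.

Lemma cnf_sat_iff A : S (cnf_formula A) <-> (forall C, In C A -> csat C).
Proof.
  unfold cnf_formula. rewrite sat_bigand. split.
  - intros H C HC. apply H. apply in_map; auto.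
  - intros H F HF. apply in_map_iff in HF as [C [<- HC]]. apply H; auto.
Qed.

Lemma res_sound C1 C2 C : csat C1 -> csat C2 -> In C (res C1 C2) -> csat C.
Proof.
  intros H1 H2 HC. unfold res in HC. apply in_flat_map in HC as [L [HL HC]].
  destruct (existsb _ C2); [|destruct HC]. destruct HC as [<-|[]].
  apply csat_iff. apply csat_iff in H1, H2.
  destruct (classic (S (lit_formula L))) as [HLs|HLs].
  - destruct H2 as [M [HM HMs]]. exists M. split; [apply in_or_app; right; apply in_remove_lit; auto|auto].
    intro E; subst M. destruct L as [[|] a]; unfold lit_formula in *; simpl in *; tauto.
  - destruct H1 as [M [HM HMs]]. exists M. split; [apply in_or_app; left; apply in_remove_lit; auto|auto].
    intro E; subst M. tauto.
Qed.

Lemma para_sound C1 C2 C : csat C1 -> csat C2 -> para C1 C2 C -> csat C.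
Proof.
  intros H1 H2 [s [t [e [He [Heq [b [a [a' [Hba [Hr ->]]]]]]]]]].
  apply csat_iff. apply csat_iff in H1, H2.
  destruct (classic (S (lit_formula e))) as [Hes|Hes].
  - assert (Hst : ev_ s = ev_ t).
    { destruct Heq as [->| ->]; simpl in Hes; auto. }
    destruct H2 as [M [HM HMs]].
    destruct (classic (M = (b, a))) as [->|Hne].
    + exists (b, a'). split; [left; auto|].
      pose proof (rep_a_sat _ _ _ _ Hst Hr). unfold lit_formula in *; simpl in *.
      destruct b; simpl in *; tauto.
    + exists M. split; auto. right. apply in_or_app; left. apply in_remove_lit; auto.
  - destruct H1 as [M [HM HMs]]. exists M. split; [|auto]. right. apply in_or_app; right.
    apply in_remove_lit; auto. intro E; subst; tauto.
Qed.
End Sem.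

Lemma drop_two_in j m A C : In C (drop_two j m A) -> In C A.
Proof.
  unfold drop_two. intro H. apply in_map_iff in H as [[i c] [Hc H]]. simpl in Hc; subst c.
  apply filter_In in H as [H _]. apply in_combine_r in H. auto.
Qed.

Lemma drop_two_len_aux j m (A : cnf) : forall s, j <> m ->
  length (filter (fun ic : nat * clause => negb (Nat.eqb (fst ic) j) && negb (Nat.eqb (fst ic) m))
     (combine (seq s (length A)) A))
  + (if (s <=? j) && (j <? s + length A) then 1 else 0)
  + (if (s <=? m) && (m <? s + length A) then 1 else 0) <= length A.
Proof.
  induction A as [|a A IH]; intros s Hjm; simpl.
  - rewrite Nat.add_0_r. destruct (Nat.leb_spec s j), (Nat.leb_spec s m), (Nat.ltb_spec j s), (Nat.ltb_spec m s); simpl; lia.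
  - specialize (IH (S s) Hjm). revert IH. cbn [seq combine filter fst length].
    destruct (Nat.eqb_spec s j); destruct (Nat.eqb_spec s m); cbn [negb andb length];
    repeat match goal with
    | |- context [?x <=? ?y] => destruct (Nat.leb_spec x y)
    | |- context [?x <? ?y] => destruct (Nat.ltb_spec x y)
    end; cbn [negb andb length]; lia.
Qed.

Lemma forget_len A B : forget A B -> length B < length A.
Proof.
  intros [j [m [C [Hjm [Hj [Hm [_ ->]]]]]]]. simpl. unfold drop_two. rewrite length_map.
  pose proof (drop_two_len_aux j m A 0 Hjm). simpl in H.
  destruct (Nat.ltb_spec j (length A)); [|lia]. destruct (Nat.ltb_spec m (length A)); [|lia].
  simpl in H. lia.
Qed.

Lemma prune_len n A : length (prune n A) <= length A.
Proof. unfold prune. induction A; simpl; auto. destruct (has_alpha_c n a); simpl; lia. Qed.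

Section Sem.
Variables (D : Type) (fi : nat -> list D -> D) (pi : nat -> list D -> Prop) (ev : nat -> D) (ea : nat -> D).

Lemma forget_sound A B : forget A B ->
  (forall C, In C A -> csat D fi pi ev ea C) -> (forall C, In C B -> csat D fi pi ev ea C).
Proof.
  intros [j [m [C [Hjm [Hj [Hm [HC ->]]]]]]] HA C' [<-|HC'].
  - assert (H1 := HA _ (nth_In _ [] Hj)). assert (H2 := HA _ (nth_In _ [] Hm)).
    destruct HC; [eapply (res_sound _ _ _ _ _ _ _ _ H1 H2)| eapply (para_sound _ _ _ _ _ _ _ _ H1 H2)]; eauto.
  - apply HA. eapply drop_two_in; eauto.
Qed.
End Sem.

Lemma alpha_fn n f l : alpha_term n (Fn f l) <-> Forall (alpha_term n) l.
Proof.
  simpl. induction l; simpl; split; intros; auto.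
  - destruct H; constructor; auto. apply IHl; auto.
  - inversion H; subst. split; auto. apply IHl; auto.
Qed.

Lemma alpha_bigand n l : alpha_formula n (bigand l) <-> Forall (alpha_formula n) l.
Proof.
  induction l as [|a l IH]; [simpl; split; auto|].
  destruct l as [|b l'].
  - simpl. split; [intro; constructor; auto| intro H; inversion H; auto].
  - change (bigand (a :: b :: l')) with (FAnd a (bigand (b :: l'))).
    simpl alpha_formula at 1. rewrite IH. split; [intros [? ?]; constructor; auto| intro H; inversion H; auto].
Qed.

Lemma alpha_bigor n l : alpha_formula n (bigor l) <-> Forall (alpha_formula n) l.
Proof.
  induction l as [|a l IH]; [simpl; split; auto|].
  destruct l as [|b l'].
  - simpl. split; [intro; constructor; auto| intro H; inversion H; auto].
  - change (bigor (a :: b :: l')) with (FOr a (bigor (b :: l'))).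
    simpl alpha_formula at 1. rewrite IH. split; [intros [? ?]; constructor; auto| intro H; inversion H; auto].
Qed.

Definition cok n (C : clause) := forall L, In L C -> alpha_formula n (lit_formula L).

Lemma alpha_cnf n A : alpha_formula n (cnf_formula A) <-> (forall C, In C A -> cok n C).
Proof.
  unfold cnf_formula. rewrite alpha_bigand, Forall_forall. unfold cok. split.
  - intros H C HC L HL. assert (H1 := H _ (in_map clause_formula _ _ HC)).
    unfold clause_formula in H1. rewrite alpha_bigor, Forall_forall in H1. apply H1, in_map; auto.
  - intros H F HF. apply in_map_iff in HF as [C [<- HC]]. unfold clause_formula.
    rewrite alpha_bigor, Forall_forall. intros G HG. apply in_map_iff in HG as [L [<- HL]]. exact (H C HC L HL).
Qed.

Lemma rep_alpha n s t : alpha_term n t ->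
  (forall u u', rep_t s t u u' -> alpha_term n u -> alpha_term n u') /\
  (forall l l', rep_l s t l l' -> Forall (alpha_term n) l -> Forall (alpha_term n) l').
Proof.
  intro Ht. split.
  - apply (rep_t_ind2 s t (fun u u' _ => alpha_term n u -> alpha_term n u')
      (fun l l' _ => Forall (alpha_term n) l -> Forall (alpha_term n) l')); intros; auto.
    + rewrite alpha_fn in *. auto.
    + inversion H0; subst; constructor; auto.
    + inversion H0; subst; constructor; auto.
  - apply (rep_l_ind2 s t (fun u u' _ => alpha_term n u -> alpha_term n u')
      (fun l l' _ => Forall (alpha_term n) l -> Forall (alpha_term n) l')); intros; auto.
    + rewrite alpha_fn in *. auto.
    + inversion H0; subst; constructor; auto.
    + inversion H0; subst; constructor; auto.
Qed.

Lemma cok_remove n L C : cok n C -> cok n (remove_lit L C).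
Proof. intros H M HM. apply H. eapply remove_lit_in; eauto. Qed.

Lemma cok_app n C1 C2 : cok n C1 -> cok n C2 -> cok n (C1 ++ C2).
Proof. intros H1 H2 M HM. apply in_app_or in HM as [?|?]; auto. Qed.

Lemma forget_alpha n A B : forget A B -> (forall C, In C A -> cok n C) -> (forall C, In C B -> cok n C).
Proof.
  intros [j [m [C [Hjm [Hj [Hm [HC ->]]]]]]] HA C' [<-|HC'].
  - assert (H1 := HA _ (nth_In _ [] Hj)). assert (H2 := HA _ (nth_In _ [] Hm)).
    destruct HC as [HC|HC].
    + unfold res in HC. apply in_flat_map in HC as [L [HL HC]].
      destruct (existsb _ _); [|destruct HC]. destruct HC as [<-|[]].
      apply cok_app; apply cok_remove; auto.
    + destruct HC as [s [t [e [He [Heq [b [a [a' [Hba [Hr ->]]]]]]]]]].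
      intros M [<-|HM].
      * assert (Ht : alpha_term n t).
        { specialize (H1 _ He). destruct Heq as [->| ->]; simpl in H1; tauto. }
        destruct (rep_alpha n s t Ht) as [Rt Rl].
        specialize (H2 _ Hba). unfold lit_formula in *; simpl in *.
        assert (alpha_formula n (atom_formula a')).
        { destruct b; simpl in H2; destruct Hr; simpl in *; intuition eauto. }
        destruct b; simpl; auto.
      * revert M HM. apply cok_app; apply cok_remove; auto.
  - apply HA. eapply drop_two_in; eauto.
Qed.

Lemma existsb_false_in {X} (f : X -> bool) l x : existsb f l = false -> In x l -> f x = false.
Proof.
  intros H Hx. destruct (f x) eqn:E; auto. rewrite <- H. symmetry. apply existsb_exists. eauto.
Qed.

Lemma noalpha_eval D fi ev n t : alpha_term n t -> has_alpha_t n t = false ->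
  forall ea1 ea2, eval D fi ev ea1 t = eval D fi ev ea2 t.
Proof.
  induction t using term_ind'; simpl; intros Ha Hh ea1 ea2; auto.
  - apply Nat.ltb_ge in Hh. lia.
  - f_equal. apply map_ext_in. intros a Hal. rewrite Forall_forall in H.
    assert (Ha' := proj1 (alpha_fn n f l) Ha). rewrite Forall_forall in Ha'.
    apply H; auto. eapply existsb_false_in; eauto.
Qed.

Lemma noalpha_csat D fi pi ev n C : cok n C -> has_alpha_c n C = false ->
  forall ea1 ea2, csat D fi pi ev ea1 C -> csat D fi pi ev ea2 C.
Proof.
  intros Hc Hh ea1 ea2 H. apply csat_iff in H as [L [HL HS]]. apply csat_iff. exists L. split; auto.
  assert (Hh' := existsb_false_in _ _ _ Hh HL). simpl in Hh'.
  specialize (Hc _ HL). destruct L as [b a]. unfold lit_formula in *; simpl in *.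
  assert (E : sat D fi pi ev ea1 (atom_formula a) <-> sat D fi pi ev ea2 (atom_formula a)).
  { destruct a; simpl in *.
    - assert (Hf : Forall (alpha_term n) l) by (destruct b; auto).
      rewrite Forall_forall in Hf.
      erewrite map_ext_in; [reflexivity|]. intros t Ht.
      apply (noalpha_eval D fi ev n); auto. eapply existsb_false_in; eauto.
    - apply orb_false_iff in Hh' as [h1 h2].
      assert (Hf : alpha_term n t /\ alpha_term n t0) by (destruct b; auto). destruct Hf.
      rewrite (noalpha_eval D fi ev n t H h1 ea1 ea2), (noalpha_eval D fi ev n t0 H0 h2 ea1 ea2). tauto. }
  destruct b; simpl in *; tauto.
Qed.

Lemma prune_solution p bs n U W A :
  is_solution p bs n U W (cnf_formula A) -> is_solution p bs n U W (cnf_formula (prune n A)).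
Proof.
  intros [Ha Hv]. split.
  { rewrite alpha_cnf in *. intros C HC. apply filter_In in HC. apply Ha; tauto. }
  intros D fi pi ev ea HG. apply Hv. intros F [<-|HF]; [|apply HG; right; auto].
  simpl. intro HA.
  assert (Hfirst := HG _ (or_introl eq_refl)). simpl in Hfirst.
  rewrite cnf_sat_iff in HA.
  assert (HA' : sat D fi pi ev ea (cnf_formula (prune n A))).
  { rewrite cnf_sat_iff; intros C HC; apply filter_In in HC; apply HA; tauto. }
  specialize (Hfirst HA'). rewrite sat_bigand in *. intros F HF.
  apply in_map_iff in HF as [w [<- Hw]].
  specialize (Hfirst _ (in_map _ _ _ Hw)). rewrite sat_asubst, cnf_sat_iff in *. intros C HC.
  destruct (has_alpha_c n C) eqn:E.
  - apply Hfirst. apply filter_In; auto.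
  - rewrite alpha_cnf in Ha. eapply noalpha_csat; eauto.
Qed.

Lemma forget_solution p bs n U W A B :
  is_solution p bs n U W (cnf_formula A) -> forget A B -> sf_test p bs U W B ->
  is_solution p bs n U W (cnf_formula B).
Proof.
  intros [Ha Hv] Hf Ht. split.
  { rewrite alpha_cnf in *. eapply forget_alpha; eauto. }
  intros D fi pi ev ea HG.
  destruct (classic (sat D fi pi ev ea (cnf_formula B))) as [HB|HB].
  - apply Ht. intros F HF. apply in_app_or in HF as [HF|HF].
    + assert (Hfirst := HG _ (or_introl eq_refl)). simpl in Hfirst.
      specialize (Hfirst HB). rewrite sat_bigand in Hfirst. auto.
    + apply HG; right; auto.
  - apply Hv. intros F [<-|HF]; [|apply HG; right; auto]. simpl. intro HA. exfalso. apply HB.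
    rewrite cnf_sat_iff in *. eapply forget_sound; eauto.
Qed.

Lemma SF_sound p bs n U W : forall A R, SF n (sf_test p bs U W) A R ->
  is_solution p bs n U W (cnf_formula A) -> forall C, R C -> is_solution p bs n U W (cnf_formula C).
Proof.
  induction 1 as [A Rs HRs IH]. intros Hs C [->|[B [Hf [Ht HR]]]].
  - apply prune_solution; auto.
  - eapply IH; eauto. eapply forget_solution; [apply prune_solution; exact Hs| exact Hf| exact Ht].
Qed.

Lemma SF_exists n test : forall k A, length A < k -> exists R, SF n test A R.
Proof.
  induction k; [lia|]. intros A HA.
  assert (H : forall B, exists R, forget (prune n A) B -> test B -> SF n test B R).
  { intro B. destruct (classic (forget (prune n A) B)) as [Hf|Hf].
    - assert (length B < k) by (pose proof (forget_len _ _ Hf); pose proof (prune_len n A); lia).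
      destruct (IHk B H) as [R HR]. exists R; auto.
    - exists (fun _ => False). tauto. }
  pose (Rs := fun B => proj1_sig (constructive_indefinite_description _ (H B))).
  eexists. refine (SF_call n test A Rs _).
  intros B Hf Ht. exact (proj2_sig (constructive_indefinite_description _ (H B)) Hf Ht).
Qed.

Theorem mainTheorem3
  (p : nat) (bs : list block) (H : list (list (list term)))
  (n : nat) (U : list (list (list term))) (W : list (list term)) (A : cnf) :
  sigma1_sequent p bs ->
  herbrand_structure p bs H ->
  decomposition bs H n U W ->
  is_solution p bs n U W (cnf_formula A) ->
  (exists R, SF n (sf_test p bs U W) A R) /\
  (forall R, SF n (sf_test p bs U W) A R ->
     forall B, R B -> is_solution p bs n U W (cnf_formula B)).
Proof.
  intros _ _ _ Hs. split.
  - apply (SF_exists _ _ (S (length A))). lia.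
  - intros R HR. eapply SF_sound; eauto.
Qed.
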